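(* Let $Y=M(b;(a_1,b_1),\dots,(a_k,b_k))$, $k\ge3$, be a negative-definite Seifert manifold which is a $\mathbb Z/2\mathbb Z$-homology sphere, and assume that the class $g_0$ of the central node is trivial in $H=H_1(Y;\mathbb Z)$. Then at most $2^k$ of the series $\widehat Z_b(q)$, $b$ ranging over the spin$^c$ structures of $Y$, are nonzero.
   Context: Seifert data: $b\in\mathbb Z$, pairs $(a_i,b_i)$ with $0<b_i<a_i$, $\gcd(a_i,b_i)=1$; $Y$ is the plumbed manifold of the star-shaped tree with central node $v_0$ of framing $-b$ and $k$ legs whose framings $-c^{(j)}_1,\dots,-c^{(j)}_{n_j}$ ($c^{(j)}_i\ge2$) come from the continued fraction $a_j/b_j=c^{(j)}_1-1/(c^{(j)}_2-\cdots-1/c^{(j)}_{n_j})$. The plumbing matrix $M$ ($s$ vertices; diagonal = framings, $1$ for adjacent vertices, else $0$) is negative definite; $H\cong\mathbb Z^s/M\mathbb Z^s$, and $g_0$ is the class of the basis vector of $v_0$. Spin$^c$ structures are cosets $b\in(2\mathbb Z^s+\vec\delta)/2M\mathbb Z^s$ ($\vec\delta$ = vector of vertex degrees $\delta_v$). With $\mathrm{s.e.}\prod_v(z_v-z_v^{-1})^{2-\delta_v}=\sum_{\vec l}c_{\vec l}\vec z^{\,\vec l}$ (symmetric expansion: average of Laurent expansions about $z=0$ and $z=\infty$ of each factor), $\widehat Z_b(q)=q^{(-3s-\mathrm{Tr}M)/4}\sum_{\vec l\in b}c_{\vec l}\,q^{-(\vec l,M^{-1}\vec l)/4}$. *)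

(* Defs.v *)
From HB Require Import structures.
From mathcomp Require Import all_boot all_order all_algebra.
From mathcomp Require Import classical_sets fsbigop.
Set Implicit Arguments. Unset Strict Implicit. Unset Printing Implicit Defensive.
Import Order.TTheory GRing.Theory Num.Theory.
Local Open Scope ring_scope.

Fixpoint hj_val (l : seq nat) : rat :=
  match l with
  | [::] => 0
  | [:: x] => x%:R
  | x :: t => x%:R - (hj_val t)^-1
  end.

(* vertices: None = central node v0; Some (j, i) = i-th vertex (i = 0 is
   adjacent to v0) of the j-th leg, whose framings are -c j. *)
Definition vert (k : nat) (c : 'I_k -> seq nat) : finType :=
  option {j : 'I_k & 'I_(size (c j))}.

Definition vadj k (c : 'I_k -> seq nat) (v w : vert c) : bool :=
  match v, w with
  | None, None => false
  | None, Some x => nat_of_ord (tagged x) == 0%N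
  | Some x, None => nat_of_ord (tagged x) == 0%N
  | Some x, Some y =>
      (tag x == tag y) &&
      (((tagged x).+1 == tagged y :> nat) || ((tagged y).+1 == tagged x :> nat))
  end.

Definition framing k (b : int) (c : 'I_k -> seq nat) (v : vert c) : int :=
  match v with
  | None => - b
  | Some x => - ((nth 0%N (c (tag x)) (tagged x))%:Z)
  end.

Definition nverts k (c : 'I_k -> seq nat) : nat := #|vert c|.

Definition vof k (c : 'I_k -> seq nat) (i : 'I_(nverts c)) : vert c := enum_val i.

Definition plumb k (b : int) (c : 'I_k -> seq nat) : 'M[int]_(nverts c) :=
  \matrix_(i, j) (if i == j then framing b (vof i)
                  else (vadj (vof i) (vof j))%:Z).

Definition vdeg k (c : 'I_k -> seq nat) (v : vert c) : nat :=
  #|[pred w | vadj v w]|.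

Definition degvec k (c : 'I_k -> seq nat) : 'cV[int]_(nverts c) :=
  \col_i ((vdeg (vof i))%:Z).

Definition v0idx k (c : 'I_k -> seq nat) : 'I_(nverts c) :=
  enum_rank (None : vert c).

Definition neg_definite n (M : 'M[int]_n) : Prop :=
  forall x : 'cV[rat]_n, x != 0 -> ((x^T *m map_mx intr M *m x) 0 0 < 0).

(* H_1(Y;Z/2) = H / 2H = Z^s / (M Z^s + 2 Z^s) = 0 *)
Definition Z2_homology_sphere n (M : 'M[int]_n) : Prop :=
  forall x : 'cV[int]_n, exists y z : 'cV[int]_n, x = M *m y + 2%:Z *: z.

(* the class of the basis vector e_v in H = Z^s / M Z^s is trivial *)
Definition class_trivial n (M : 'M[int]_n) (v : 'I_n) : Prop :=
  exists y : 'cV[int]_n, M *m y = delta_mx v 0.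

Definition gbinom (m : int) (j : nat) : rat :=
  (\prod_(i < j) (m%:~R - i%:R)) / (j`!)%:R.

(* (z - 1/z)^m = (-1/z)^m (1 - z^2)^m : coefficient of z^l in the Laurent
   expansion about z = 0 *)
Definition exp0_coef (m l : int) : rat :=
  \sum_(j < (absz (l + m)).+1 | l + m == 2 * (j%:Z))
     ((-1) ^ m * (-1) ^+ j * gbinom m j).

(* (z - 1/z)^m = z^m (1 - z^-2)^m : coefficient of z^l in the Laurent
   expansion about z = infinity *)
Definition expinf_coef (m l : int) : rat :=
  \sum_(j < (absz (m - l)).+1 | m - l == 2 * (j%:Z))
     ((-1) ^+ j * gbinom m j).

Definition se_coef (m l : int) : rat := (exp0_coef m l + expinf_coef m l) / 2.

(* c_l for s.e. prod_v (z_v - 1/z_v)^(2 - deg v) *)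
Definition zcoef k (c : 'I_k -> seq nat) (l : 'cV[int]_(nverts c)) : rat :=
  \prod_(i < nverts c) se_coef (2 - (vdeg (vof i))%:Z) (l i 0).

Definition spinc_rep k (c : 'I_k -> seq nat) (r : 'cV[int]_(nverts c)) : Prop :=
  exists x : 'cV[int]_(nverts c), r = 2%:Z *: x + degvec c.

Definition spinc_eq k (b : int) (c : 'I_k -> seq nat)
  (r r' : 'cV[int]_(nverts c)) : Prop :=
  exists y : 'cV[int]_(nverts c), r - r' = 2%:Z *: (plumb b c *m y).

Definition qexp k (b : int) (c : 'I_k -> seq nat) (l : 'cV[int]_(nverts c)) : rat :=
  let M := map_mx (intr : int -> rat) (plumb b c) in
  let lq := map_mx (intr : int -> rat) l in
  (- (3 * (nverts c)%:R) - \tr M) / 4 - ((lq^T *m invmx M *m lq) 0 0) / 4.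

(* coefficient of q^e in Zhat_r(q) (r a representative of the spin^c
   structure); the sum is over the (finite) set of l in the coset of r
   with exponent e *)
Definition zhat_coef k (b : int) (c : 'I_k -> seq nat)
  (r : 'cV[int]_(nverts c)) (e : rat) : rat :=
  (\sum_(l \in [set l | @spinc_eq k b c l r /\ @qexp k b c l = e]) @zcoef k c l)%R.

Definition zhat_nonzero k (b : int) (c : 'I_k -> seq nat)
  (r : 'cV[int]_(nverts c)) : Prop :=
  exists e : rat, @zhat_coef k b c r e != 0.

(* Main.v *)
Require Import Defs.
From HB Require Import structures.
From mathcomp Require Import all_boot all_order all_algebra.
From mathcomp Require Import classical_sets fsbigop.
From mathcomp Require Import zify ring.
Import Order.TTheory GRing.Theory Num.Theory.
Local Open Scope ring_scope.

Lemma sum_neq0_ex (n : nat) (P : pred 'I_n) (F : 'I_n -> rat) :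
  \sum_(j < n | P j) F j != 0 -> exists j, P j && (F j != 0).
Proof.
case: (pickP [pred j | P j && (F j != 0)]) => [j Hj|H0 H]; first by exists j.
case/negP: H; rewrite big1 // => j Pj; apply/eqP.
by move: (H0 j) => /=; rewrite Pj /= => /negbFE.
Qed.

Lemma gbinom_nat (n j : nat) : gbinom n%:Z j != 0 -> (j <= n)%N.
Proof.
rewrite /gbinom; apply: contraR; rewrite -ltnNge => ltnj.
rewrite (bigD1 (Ordinal ltnj)) //= -pmulrn subrr !mul0r.
by [].
Qed.

Lemma se_supp (n : nat) (l : int) : se_coef n%:Z l != 0 ->
  (- n%:Z <= l <= n%:Z) /\ exists t : int, l - n%:Z = 2 * t.
Proof.
rewrite /se_coef mulf_eq0 negb_or => /andP [H _].
have [H1|H1] : exp0_coef n l != 0 \/ expinf_coef n l != 0.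
  by case: (eqVneq (exp0_coef n l) 0) H => [->|]; [rewrite add0r; right|left].
- case/sum_neq0_ex: H1 => j /andP [/eqP E Hj].
  rewrite mulf_eq0 negb_or in Hj; case/andP: Hj => _ /gbinom_nat Hjn.
  split; last by exists (j%:Z - n%:Z); lia.
  apply/andP; split; lia.
- case/sum_neq0_ex: H1 => j /andP [/eqP E Hj].
  rewrite mulf_eq0 negb_or in Hj; case/andP: Hj => _ /gbinom_nat Hjn.
  split; last by exists (- j%:Z); lia.
  apply/andP; split; lia.
Qed.

Lemma se_par (m l : int) : se_coef m l != 0 -> exists t : int, l - m = 2 * t.
Proof.
rewrite /se_coef mulf_eq0 negb_or => /andP [H _].
have [H1|H1] : exp0_coef m l != 0 \/ expinf_coef m l != 0.
  by case: (eqVneq (exp0_coef m l) 0) H => [->|]; [rewrite add0r; right|left].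
- case/sum_neq0_ex: H1 => j /andP [/eqP E _]; exists (j%:Z - m); lia.
- case/sum_neq0_ex: H1 => j /andP [/eqP E _]; exists (- j%:Z); lia.
Qed.
Section G.
Variables (k : nat) (c : 'I_k -> seq nat).

Lemma deg_le2 (x : {j : 'I_k & 'I_(size (c j))}) : (vdeg (Some x : vert c) <= 2)%N.
Proof.
rewrite /vdeg; case: x => j i.
pose f := fun w : vert c => match w with None => false | Some y => (i < tagged y)%N end.
apply: leq_trans (@leq_card_in _ _ f _ _) _; last by rewrite card_bool.
move=> w1 w2; case: w1 => [[j1 i1]|]; case: w2 => [[j2 i2]|]; rewrite !inE /= => H1 H2 // Ef.
- case/andP: H1 => /eqP E1 O1; case/andP: H2 => /eqP E2 O2.
  subst j1 j2.
  have -> : i1 = i2; last by [].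
  apply: val_inj => /=.
  move: O1 O2 Ef; case/orP => /eqP A; case/orP => /eqP B; lia.
- case/andP: H1 => /eqP E1 /orP [/eqP E|/eqP E]; lia.
- case/andP: H2 => /eqP E1 /orP [/eqP E|/eqP E]; lia.
Qed.

Lemma deg_ge1 (x : {j : 'I_k & 'I_(size (c j))}) : (1 <= vdeg (Some x : vert c))%N.
Proof.
rewrite /vdeg; apply/card_gt0P.
case: x => j i.
case: (posnP i) => [i0|ip].
  by exists None; rewrite inE /= i0.
have lt : (i.-1 < size (c j))%N by apply: leq_ltn_trans (leq_pred _) (ltn_ord i).
exists (Some (Tagged (fun j => 'I_(size (c j))) (Ordinal lt))).
rewrite inE /= eqxx /=; apply/orP; right; rewrite prednK //.
Qed.

Lemma deg_ge2 (x : {j : 'I_k & 'I_(size (c j))}) :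
  ((tagged x).+1 < size (c (tag x)))%N -> (1 < vdeg (Some x : vert c))%N.
Proof.
rewrite /vdeg; case: x => j i /= lt2; apply/card_gt1P.
exists (Some (Tagged (fun j => 'I_(size (c j))) (Ordinal lt2))).
case: (posnP i) => [i0|ip].
  exists None; rewrite !inE /= i0 eqxx /=; split => //.
have lt : (i.-1 < size (c j))%N by apply: leq_ltn_trans (leq_pred _) (ltn_ord i).
exists (Some (Tagged (fun j => 'I_(size (c j))) (Ordinal lt))).
rewrite !inE /= !eqxx /=; split.
- done.
- by apply/orP; right; rewrite prednK.
- apply/negP => /eqP [] E; lia.
Qed.
End G.

From Stdlib Require Import Classical.

Theorem corollary4p2 (k : nat) (b : int) (a bb : 'I_k -> nat)
  (c : 'I_k -> seq nat) :
  (3 <= k)%N ->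
  (forall j, 0 < bb j < a j)%N ->
  (forall j, coprime (a j) (bb j)) ->
  (forall j, (0 < size (c j))%N /\ all (fun x => 2 <= x)%N (c j)
             /\ hj_val (c j) = (a j)%:R / (bb j)%:R) ->
  neg_definite (plumb b c) ->
  Z2_homology_sphere (plumb b c) ->
  class_trivial (plumb b c) (v0idx c) ->
  forall (m : nat) (r : 'I_m -> 'cV[int]_(nverts c)),
    (forall i, spinc_rep (r i)) ->
    (forall i j, i != j -> ~ spinc_eq b (r i) (r j)) ->
    (forall i, zhat_nonzero b (r i)) ->
    (m <= 2 ^ k)%N.
Proof.
move=> hk hb hcop hc hnd hZ2 [y0 Hy0] m r hrep hdist hnz.
have hsz j : (0 < size (c j))%N := (hc j).1.
have hl : forall i, exists l, spinc_eq b l (r i) /\ @zcoef k c l != 0.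
  move=> i; case: (hnz i) => e He.
  apply: NNPP => Hn; move/eqP: He; apply.
  rewrite /zhat_coef fsbig1 // => l [Hs _].
  apply/eqP; apply/negPn/negP => Hz; apply: Hn; exists l; split => //.
case: (fin_all_exists hl) => L HL.
have lvlt j : ((size (c j)).-1 < size (c j))%N by rewrite ltn_predL.
pose lv j : vert c := Some (Tagged (fun j => 'I_(size (c j))) (Ordinal (lvlt j))).
pose P i := [ffun j => (0 < L i (enum_rank (lv j)) 0)].
rewrite -{1}(card_ord m).
have -> : (2 ^ k)%N = #|{ffun 'I_k -> bool}| by rewrite card_ffun card_bool card_ord.
apply: (@leq_card _ _ P) => i1 i2 HP.
apply/eqP; apply: contraT => Hne; case: (hdist _ _ Hne).
case: (HL i1) => [[y1 E1] Z1]; case: (HL i2) => [[y2 E2] Z2].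
have Zp i p : se_coef (2 - (vdeg (vof p))%:Z) (L i p 0) != 0.
  by case: (HL i) => _ /prodf_neq0 H; apply: H.
have key : exists t : int, L i1 - L i2 = 2%:Z *: (t *: delta_mx (v0idx c) 0).
  have vo : vof (v0idx c) = None by rewrite /vof /v0idx enum_rankK.
  have [t1 T1] := @se_par _ _ (Zp i1 (v0idx c)).
  have [t2 T2] := @se_par _ _ (Zp i2 (v0idx c)).
  exists (t1 - t2); apply/matrixP => p q; rewrite (ord1 q) !mxE.
  case: (eqVneq p (v0idx c)) => [->|hp]; first by rewrite eqxx /=; lia.
  suff -> : L i1 p 0 = L i2 p 0 by rewrite subrr /= mulr0 mulr0.
  case E: (vof p) => [x|]; last first.
    by case/eqP: hp; rewrite -(enum_valK p) -/(vof p) E.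
  have H1 := Zp i1 p; have H2 := Zp i2 p; rewrite E in H1 H2.
  have d1 := @deg_ge1 _ c x; have d2 := @deg_le2 _ c x.
  have [Hd|Hd] : vdeg (Some x : vert c) = 2%N \/ vdeg (Some x : vert c) = 1%N.
    by move: d1 d2; case: (vdeg _) => [|[|[|n]]] //; auto.
  - rewrite Hd in H1 H2.
    have [/andP[A1 B1] _] := @se_supp 0 _ H1; have [/andP[A2 B2] _] := @se_supp 0 _ H2.
    lia.
  - rewrite Hd in H1 H2.
    have [/andP[A1 B1] [s1 S1]] := @se_supp 1 _ H1.
    have [/andP[A2 B2] [s2 S2]] := @se_supp 1 _ H2.
    have Hlast : (tagged x).+1 = size (c (tag x)).
      apply/eqP; rewrite eqn_leq ltn_ord andTb leqNgt; apply/negP => /(@deg_ge2 _ c).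
      by rewrite Hd.
    have Ep : p = enum_rank (lv (tag x)).
      rewrite -(enum_valK p) -/(vof p) E; congr enum_rank; congr Some.
      case: x E H1 H2 Hd d1 d2 Hlast => j i /= _ _ _ _ _ _ Hlast.
      congr existT; apply: val_inj => /=; lia.
    move/ffunP: HP => /(_ (tag x)); rewrite !ffunE -Ep => HP.
    move: HP; case: (ltrP 0 (L i1 p 0)); case: (ltrP 0 (L i2 p 0)) => //= *; lia.
case: key => t Et.
exists (y2 - y1 + t *: y0).
rewrite !mulmxDr mulmxN -scalemxAr Hy0.
apply/matrixP => p q; move/matrixP: Et => /(_ p q); move/matrixP: E1 => /(_ p q);
  move/matrixP: E2 => /(_ p q); rewrite !mxE.
move: (t * _) (\sum_j _ * y1 j q) (\sum_j _ * y2 j q) => X S1 S2.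
move=> A B C.
have -> : r i1 p q = L i1 p q - 2%Z * S1 by rewrite -B; ring.
have -> : r i2 p q = L i2 p q - 2%Z * S2 by rewrite -A; ring.
have -> : L i1 p q = L i2 p q + 2%Z * X by rewrite -C; ring.
ring.
Qed.
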